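(* Let $D\ge2$, let $\eta_{\mu\nu}$ be a nondegenerate symmetric bilinear form on $\mathbb{R}^D$ with inverse $\eta^{\mu\nu}$, and let $a_{\mu\nu\rho\lambda}$ be a real tensor on $\mathbb{R}^D$ satisfying $$a_{\mu\nu\rho\lambda}=-a_{\nu\mu\rho\lambda}=-a_{\mu\nu\lambda\rho}=a_{\rho\lambda\mu\nu},\qquad a_{\mu\nu\rho\lambda}+a_{\mu\rho\lambda\nu}+a_{\mu\lambda\nu\rho}=0.$$ Suppose that for all $u,v\in\mathbb{R}^D$, $$a_{\mu\rho\nu\lambda}\,\eta^{\mu\nu}v^\rho v^\lambda\,(u\cdot v)^2+a_{\mu\rho\nu\lambda}\,u^\mu u^\nu v^\rho v^\lambda\,(v\cdot v)=0,$$ where $u\cdot v=\eta_{\alpha\beta}u^\alpha v^\beta$. Then $a_{\mu\nu\rho\lambda}=0$.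
   Context: This polynomial identity is the condition (in the variables $u^\mu=\partial_zX^\mu$, $v^\mu=\partial_{\bar z}X^\mu$) for the operator $:\!\big(a_{\mu\nu\rho\lambda}\partial_zX^\mu\partial_{\bar z}X^\nu\partial_zX^\rho\partial_{\bar z}X^\lambda\big)/\big(\eta_{\alpha\beta}\partial_zX^\alpha\partial_{\bar z}X^\beta\big)\!:$ in the free boson theory with target metric $\eta$ to be a conformal primary, i.e. the condition $\eta^{\mu\nu}\partial^2F/\partial u^\mu\partial u^\nu=0$ for $F(u,v)=a_{\mu\rho\nu\lambda}u^\mu u^\nu v^\rho v^\lambda/(u\cdot v)$. The symmetry conditions on $a$ are those of an areal metric (perturbation) with the cyclicity condition. *)

(* Defs.v *)
From HB Require Import structures.
From mathcomp Require Import all_boot all_order all_algebra.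
From mathcomp Require Import reals.
Set Implicit Arguments. Unset Strict Implicit. Unset Printing Implicit Defensive.
Import Order.TTheory GRing.Theory Num.Theory.
Local Open Scope ring_scope.

Definition etadot (R : realType) (D : nat) (eta : 'M[R]_D)
  (u v : 'I_D -> R) : R :=
  \sum_(a < D) \sum_(b < D) eta a b * u a * v b.

Definition areal_sym (R : realType) (D : nat)
  (a : 'I_D -> 'I_D -> 'I_D -> 'I_D -> R) : Prop :=
  forall m n r l : 'I_D,
    [/\ a m n r l = - a n m r l,
        a m n r l = - a m n l r,
        a m n r l = a r l m n &
        a m n r l + a m r l n + a m l n r = 0].

Definition primary_poly (R : realType) (D : nat) (eta : 'M[R]_D)
  (a : 'I_D -> 'I_D -> 'I_D -> 'I_D -> R) (u v : 'I_D -> R) : R :=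
  (\sum_(m < D) \sum_(r < D) \sum_(n < D) \sum_(l < D)
      a m r n l * (invmx eta) m n * v r * v l) * (etadot eta u v) ^+ 2
  + (\sum_(m < D) \sum_(r < D) \sum_(n < D) \sum_(l < D)
      a m r n l * u m * u n * v r * v l) * etadot eta v v.

(* Main.v *)
Require Import Defs.
From HB Require Import structures.
From mathcomp Require Import all_boot all_order all_algebra.
From mathcomp Require Import reals.
From mathcomp Require Import ring lra.
Set Implicit Arguments. Unset Strict Implicit. Unset Printing Implicit Defensive.
Import Order.TTheory GRing.Theory Num.Theory.
Local Open Scope ring_scope.

Lemma poly_all0 (R : realType) (p : {poly R}) : (forall t, p.[t] = 0) -> p = 0.
Proof.
move=> H; apply: (@roots_geq_poly_eq0 _ p [seq i%:R | i <- iota 0 (size p)]).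
- by apply/allP => x /mapP [i _ ->]; rewrite /root H.
- rewrite map_inj_uniq ?iota_uniq // => i j /eqP; rewrite eqr_nat => /eqP.
  done.
- by rewrite size_map size_iota.
Qed.

Lemma quad_zero (R : realType) (al be ga al' be' ga' : R) :
  ga' != 0 ->
  (forall t, (al + be * t + ga * t ^+ 2) * (al' + be' * t + ga' * t ^+ 2) ^+ 3 = 0) ->
  al = 0.
Proof.
move=> hg H.
pose P : {poly R} := al%:P + be%:P * 'X + ga%:P * 'X^2.
pose Q : {poly R} := al'%:P + be'%:P * 'X + ga'%:P * 'X^2.
have : P * Q ^+ 3 = 0.
  apply: poly_all0 => t.
  rewrite hornerM horner_exp !hornerD !hornerCM hornerC hornerC hornerX hornerXn; exact: H.
move/eqP; rewrite mulf_eq0 expf_eq0 /= => /orP [/eqP HP|/eqP HQ].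
  have := congr1 (fun p : {poly R} => p`_0) HP; rewrite /P !coefE /=.
  by rewrite !mulr0 !addr0.
have := congr1 (fun p : {poly R} => p`_2) HQ; rewrite /Q !coefE /= => HH.
by rewrite mulr0 mulr1 !add0r in HH; rewrite HH eqxx in hg.
Qed.

Definition bil {R : realType} {D : nat} (c : 'I_D -> 'I_D -> R) (x y : 'I_D -> R) :=
  \sum_(m < D) \sum_(n < D) c m n * x m * y n.
Definition ev {R : realType} {D : nat} (i : 'I_D) : 'I_D -> R := fun j => (j == i)%:R.
Definition vadd {R : realType} {D : nat} (x y : 'I_D -> R) : 'I_D -> R := fun k => x k + y k.
Definition vsc {R : realType} {D : nat} (t : R) (x : 'I_D -> R) : 'I_D -> R := fun k => t * x k.

Lemma bilD1 (R : realType) (D : nat) (c : 'I_D -> 'I_D -> R) x y z :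
  bil c (vadd x y) z = bil c x z + bil c y z.
Proof.
rewrite /bil -big_split; apply: eq_bigr => m _; rewrite -big_split.
by apply: eq_bigr => n _; rewrite /vadd mulrDr mulrDl.
Qed.
Lemma bilD2 (R : realType) (D : nat) (c : 'I_D -> 'I_D -> R) x y z :
  bil c z (vadd x y) = bil c z x + bil c z y.
Proof.
rewrite /bil -big_split; apply: eq_bigr => m _; rewrite -big_split.
by apply: eq_bigr => n _; rewrite /vadd mulrDr.
Qed.
Lemma bilZ1 (R : realType) (D : nat) (c : 'I_D -> 'I_D -> R) t x y :
  bil c (vsc t x) y = t * bil c x y.
Proof.
rewrite /bil mulr_sumr; apply: eq_bigr => m _; rewrite mulr_sumr.
by apply: eq_bigr => n _; rewrite /vsc; ring.
Qed.
Lemma bilZ2 (R : realType) (D : nat) (c : 'I_D -> 'I_D -> R) t x y :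
  bil c x (vsc t y) = t * bil c x y.
Proof.
rewrite /bil mulr_sumr; apply: eq_bigr => m _; rewrite mulr_sumr.
by apply: eq_bigr => n _; rewrite /vsc; ring.
Qed.
Lemma bilC (R : realType) (D : nat) (c c' : 'I_D -> 'I_D -> R) x y :
  bil (fun m n => c m n + c' m n) x y = bil c x y + bil c' x y.
Proof.
rewrite /bil -big_split; apply: eq_bigr => m _; rewrite -big_split.
by apply: eq_bigr => n _; rewrite !mulrDl.
Qed.

Lemma sum_delta (R : realType) (D : nat) (f : 'I_D -> R) b :
  \sum_(n < D) f n * (n == b)%:R = f b.
Proof.
rewrite (bigD1 b) //= eqxx mulr1 big1 ?addr0 // => n /negbTE ->.
by rewrite mulr0.
Qed.

Lemma bil_ev (R : realType) (D : nat) (c : 'I_D -> 'I_D -> R) i j :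
  bil c (ev i) (ev j) = c i j.
Proof.
rewrite /bil /ev.
rewrite -(sum_delta (fun m => c m j) i); apply: eq_bigr => m _.
rewrite -(sum_delta (fun n => c m n) j) mulr_suml; apply: eq_bigr => n _.
ring.
Qed.

Lemma bil_shift (R : realType) (D : nat) (c : 'I_D -> 'I_D -> R) v w t :
  bil c (vadd v (vsc t w)) (vadd v (vsc t w)) =
  bil c v v + (bil c v w + bil c w v) * t + bil c w w * t ^+ 2.
Proof.
rewrite !bilD1 !bilD2 !bilZ1 !bilZ2; ring.
Qed.

Lemma polarize (R : realType) (D : nat) (c : 'I_D -> 'I_D -> R) :
  (forall u, bil c u u = 0) -> forall i j, c i j + c j i = 0.
Proof.
move=> H i j.
have h := H (vadd (ev i) (ev j)).
rewrite !bilD1 !bilD2 !bil_ev in h.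
have hi := H (ev i); have hj := H (ev j).
rewrite bil_ev in hi; rewrite bil_ev in hj.
lra.
Qed.

Lemma final_alg (R : realType) (D : nat) (a : 'I_D -> 'I_D -> 'I_D -> 'I_D -> R) :
  areal_sym a -> (forall i k j p, a i k j p + a i p j k = 0) ->
  forall m n r l, a m n r l = 0.
Proof.
move=> S H m n r l.
have [_ s1 _ b1] := S m r n l.
have [_ s2 _ b2] := S m n r l.
have h1 := H m r n l; have h2 := H m n r l.
lra.
Qed.

Lemma sum4_antisym (R : realType) (D : nat) (f : 'I_D -> 'I_D -> 'I_D -> 'I_D -> R) :
  (forall m r n l, f r m n l = - f m r n l) ->
  \sum_(m < D) \sum_(r < D) \sum_(n < D) \sum_(l < D) f m r n l = 0.
Proof.
move=> H.
set S := (X in X = 0).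
have : S = - S.
  rewrite {1}/S exchange_big /= /S -sumrN; apply: eq_bigr => r _.
  rewrite -sumrN; apply: eq_bigr => m _.
  rewrite -sumrN; apply: eq_bigr => n _.
  rewrite -sumrN; apply: eq_bigr => l _.
  exact: H.
move=> h; lra.
Qed.

Lemma rearrA (R : realType) (D : nat) (a : 'I_D -> 'I_D -> 'I_D -> 'I_D -> R) u v :
  \sum_(m < D) \sum_(r < D) \sum_(n < D) \sum_(l < D) a m r n l * u m * u n * v r * v l
  = bil (fun m n => bil (fun r l => a m r n l) v v) u u.
Proof.
rewrite /bil; apply: eq_bigr => m _; rewrite exchange_big /=.
apply: eq_bigr => n _; rewrite !mulr_suml; apply: eq_bigr => r _.
rewrite !mulr_suml; apply: eq_bigr => l _; ring.
Qed.

Lemma rearrC (R : realType) (D : nat) (a : 'I_D -> 'I_D -> 'I_D -> 'I_D -> R) u v :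
  \sum_(m < D) \sum_(r < D) \sum_(n < D) \sum_(l < D) a m r n l * u m * u n * v r * v l
  = bil (fun r l => bil (fun m n => a m r n l) u u) v v.
Proof.
rewrite /bil exchange_big /=; apply: eq_bigr => r _.
under eq_bigr => m _ do rewrite exchange_big /=.
rewrite exchange_big /=; apply: eq_bigr => l _.
rewrite !mulr_suml; apply: eq_bigr => m _.
rewrite !mulr_suml; apply: eq_bigr => n _; ring.
Qed.

Theorem mainTheorem9 (R : realType) (D : nat) (eta : 'M[R]_D)
  (a : 'I_D -> 'I_D -> 'I_D -> 'I_D -> R) :
  (2 <= D)%N ->
  eta^T = eta ->
  eta \in unitmx ->
  areal_sym a ->
  (forall u v : 'I_D -> R, primary_poly eta a u v = 0) ->
  forall m n r l : 'I_D, a m n r l = 0.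
Proof.
move=> D2 etaT etaU S Hp.
pose T (v : 'I_D -> R) := \sum_(m < D) \sum_(r < D) \sum_(n < D) \sum_(l < D)
      a m r n l * (invmx eta) m n * v r * v l.
pose A (u v : 'I_D -> R) := \sum_(m < D) \sum_(r < D) \sum_(n < D) \sum_(l < D)
      a m r n l * u m * u n * v r * v l.
pose E (u v : 'I_D -> R) := bil (fun i j => eta i j) u v.
have HP : forall u v, T v * E u v ^+ 2 + A u v * E v v = 0 by move=> u v; exact: Hp.
have Avv : forall v, A v v = 0.
  move=> v; apply: sum4_antisym => m r n l.
  have [h _ _ _] := S r m n l; rewrite h; ring.
have Tvv : forall v, T v * E v v ^+ 2 = 0.
  by move=> v; have := HP v v; rewrite Avv mul0r addr0.
have H4 : forall u v, A u v * E v v ^+ 3 = 0.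
  move=> u v; have h1 := HP u v; have h2 := Tvv v.
  have -> : A u v * E v v ^+ 3 =
     E v v ^+ 2 * (T v * E u v ^+ 2 + A u v * E v v) - E u v ^+ 2 * (T v * E v v ^+ 2)
    by ring.
  by rewrite h1 h2; ring.
have [w hw] : exists w, E w w != 0.
  have [i [j hij]] : exists i j, eta i j != 0.
    case: (boolP [exists i, [exists j, eta i j != 0]]).
      by move=> /existsP [i /existsP [j h]]; exists i, j.
    rewrite negb_exists => /forallP H0.
    have e0 : eta = 0.
      apply/matrixP => i j; rewrite mxE.
      by have := H0 i; rewrite negb_exists => /forallP /(_ j); rewrite negbK => /eqP.
    have := mulmxV etaU; rewrite e0 mul0mx => /matrixP.
    have i0 : 'I_D by exists 0%N; apply: leq_trans D2.
    move=> /(_ i0 i0); rewrite !mxE eqxx /= => h.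
    by move/eqP: h; rewrite eq_sym /= oner_eq0.
  have eji : eta j i = eta i j.
    by have := congr1 (fun M : 'M[R]_D => M i j) etaT; rewrite /= mxE.
  case: (eqVneq (eta i i) 0) => hii; last by exists (ev i); rewrite /E bil_ev.
  case: (eqVneq (eta j j) 0) => hjj; last by exists (ev j); rewrite /E bil_ev.
  exists (vadd (ev i) (ev j)); rewrite /E !bilD1 !bilD2 !bil_ev hii hjj eji.
  apply/eqP => h; move/eqP: hij; apply; lra.
have Aall : forall u v, A u v = 0.
  move=> u v.
  have := rearrC a u v; rewrite -/(A u v) => ->.
  set C := (fun r l => _).
  apply: (@quad_zero R _ (bil C v w + bil C w v) (bil C w w)
             (E v v) (E v w + E w v) (E w w) hw) => t.
  have := H4 u (vadd v (vsc t w)).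
  by rewrite /A rearrC -/C /E !bil_shift.
have Hpol : forall i k j p, a i k j p + a i p j k = 0.
  move=> i k j p.
  have Hv : forall v, bil (fun r l => a i r j l + a j r i l) v v = 0.
    move=> v; rewrite bilC.
    apply: (@polarize R D (fun m n => bil (fun r l => a m r n l) v v)) => u.
    by rewrite -rearrA; exact: Aall.
  have := polarize Hv k p.
  have [_ _ h1 _] := S j k i p; have [_ _ h2 _] := S j p i k.
  lra.
exact: final_alg S Hpol.
Qed.
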